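(* Let $q\in L_1[0,\pi]$ with $C_0=0$ and suppose $q\in E$, i.e. $C_n=O(1/n)$ as $n\to\infty$. Then $S_j(n,q)=O(1/n)$ as $n\to\infty$ for $j=2,3,4$, where \[ S_2(n,q)=\sum_{\substack{k,l\in\mathbb{Z}\\k,\,k+l\neq0,-2n}}\frac{C_kC_lC_{-k-l}}{(2n+k)(k+l)},\quad S_3(n,q)=\sum_{\substack{k,l\in\mathbb{Z}\\k,\,k+l\neq0,-2n}}\frac{C_kC_lC_{-k-l}}{k(2n+k+l)},\quad S_4(n,q)=\sum_{\substack{k,l\in\mathbb{Z}\\k,\,k+l\neq0,-2n}}\frac{C_kC_lC_{-k-l}}{(2n+k)(2n+k+l)}. \]
   Context: $q$ is a complex-valued summable function on $[0,\pi]$; $C_k=\frac{1}{\pi}\int_0^\pi q(x)\cos kx\,dx$ for $k\in\mathbb{Z}$ (so $C_{-k}=C_k$), and it is assumed that $C_0=0$. $E$ is the set of such $q$ with $C_n=O(1/n)$. $n$ is a positive integer. *)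

(* Defs.v *)
From HB Require Import structures.
From mathcomp Require Import all_boot all_order all_algebra.
From mathcomp Require Import all_classical all_reals all_analysis.
From mathcomp Require Import complex.
Set Implicit Arguments. Unset Strict Implicit. Unset Printing Implicit Defensive.
Import Order.TTheory GRing.Theory Num.Theory ComplexField.
Import numFieldNormedType.Exports.
Local Open Scope classical_set_scope.
Local Open Scope ring_scope.

Definition L1_0pi (R : realType) (q : R -> R[i]) : Prop :=
  (@lebesgue_measure R).-integrable `[0, pi] (EFin \o (fun x => complex.Re (q x))) /\
  (@lebesgue_measure R).-integrable `[0, pi] (EFin \o (fun x => complex.Im (q x))).

(* C_k = (1/pi) \int_0^pi q(x) cos(kx) dx,  k \in Z *)
Definition Coef (R : realType) (q : R -> R[i]) (k : int) : R[i] :=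
  ((Rintegral (@lebesgue_measure R) `[0, pi]
      (fun x => complex.Re (q x) * cos (k%:~R * x)) / pi) +i*
   (Rintegral (@lebesgue_measure R) `[0, pi]
      (fun x => complex.Im (q x) * cos (k%:~R * x)) / pi))%C.

Definition zrange (N : nat) : seq int :=
  [seq (i%:Z - N%:Z) | i <- iota 0 (N + N).+1].

Definition Spart (R : realType) (q : R -> R[i]) (d : int -> int -> int)
    (n N : nat) : R[i] :=
  \sum_(k <- zrange N) \sum_(l <- zrange N |
      (k != 0) && (k != - (2 * n%:Z)) && (k + l != 0) && (k + l != - (2 * n%:Z)))
    (Coef q k * Coef q l * Coef q (- k - l)) / (d k l)%:~R.

Definition den2 (n : nat) (k l : int) : int := (2 * n%:Z + k) * (k + l).
Definition den3 (n : nat) (k l : int) : int := k * (2 * n%:Z + k + l).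
Definition den4 (n : nat) (k l : int) : int := (2 * n%:Z + k) * (2 * n%:Z + k + l).

(* "the double series with denominator d converges (as limit of the square
   partial sums; the series is in fact absolutely convergent) and its sum
   s_n satisfies s_n = O(1/n)". *)
Definition series_bigO_inv_n (R : realType) (q : R -> R[i])
    (d : nat -> int -> int -> int) : Prop :=
  exists (M : R) (n0 : nat), forall n : nat, (n0 <= n)%N -> (0 < n)%N ->
    exists s : R[i],
      (fun N => complex.Re (Spart q (d n) n N)) @ \oo --> complex.Re s /\
      (fun N => complex.Im (Spart q (d n) n N)) @ \oo --> complex.Im s /\
      `|s| <= ((M / n%:R)%:C)%C.

(* Main.v *)
Require Import Defs.
From HB Require Import structures.
From mathcomp Require Import all_boot all_order all_algebra.
From mathcomp Require Import all_classical all_reals all_analysis.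
From mathcomp Require Import complex.
From mathcomp Require Import lra zify ring.
Import Order.TTheory GRing.Theory Num.Theory ComplexField.
Import numFieldNormedType.Exports.
Local Open Scope classical_set_scope.
Local Open Scope ring_scope.

Lemma zrangeS N : zrange N.+1 = (- (N.+1)%:Z) :: rcons (zrange N) (N.+1)%:Z.
Proof.
rewrite /zrange.
have -> : (N.+1 + N.+1).+1 = ((N + N).+1 + 1).+1 by rewrite addn1 addSn addnS.
have -> : iota 0 ((N + N).+1 + 1).+1 = 0 :: iota (1 + 0) ((N + N).+1 + 1) by [].
rewrite map_cons iotaD map_cat -cats1; congr (_ :: _ ++ _); first by lia.
  rewrite iotaDl -map_comp; apply: eq_map => i /=.
  rewrite PoszD; lia.
rewrite /= !PoszD; congr [:: _]; lia.
Qed.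

Section S.
Variable R : realType.
Local Open Scope complex_scope.

Lemma sum_zrangeS (F : int -> R) (P : pred int) N :
  (forall l, P l -> 0 <= F l) ->
  \sum_(l <- zrange N | P l) F l <= \sum_(l <- zrange N.+1 | P l) F l.
Proof.
move=> F0; rewrite !(big_mkcond P) (zrangeS N).
move: (zrange N) => s; rewrite big_cons -cats1 big_cat big_cons big_nil /=.
have h : forall l, 0 <= (if P l then F l else 0) by move=> l; case: ifP => // /F0.
have := h (- N.+1%:Z); have := h (N.+1%:Z); lra.
Qed.


Definition DS (G : int -> int -> R) (P : int -> int -> bool) (N : nat) :=
  \sum_(k <- zrange N) \sum_(l <- zrange N | P k l) G k l.


Lemma DS_ge0 (G : int -> int -> R) (P : int -> int -> bool) N : (forall k l, P k l -> 0 <= G k l) -> 0 <= DS G P N.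
Proof. by move=> G0; apply: sumr_ge0 => k _; apply: sumr_ge0 => l /G0. Qed.

Lemma DS_mono (G : int -> int -> R) (P : int -> int -> bool) N : (forall k l, P k l -> 0 <= G k l) -> DS G P N <= DS G P N.+1.
Proof.
move=> G0; rewrite /DS.
apply: (@le_trans _ _ (\sum_(k <- zrange N) \sum_(l <- zrange N.+1 | P k l) G k l)).
  by apply: ler_sum => k _; apply: sum_zrangeS => l /G0.
apply: (@sum_zrangeS (fun k => \sum_(l <- zrange N.+1 | P k l) G k l) xpredT) => k _.
by apply: sumr_ge0 => l /G0.
Qed.

Lemma DS_cvg (G : int -> int -> R) (P : int -> int -> bool) (B : R) : (forall k l, P k l -> 0 <= G k l) ->
  (forall N, DS G P N <= B) ->
  exists l, DS G P @ \oo --> l /\ 0 <= l /\ l <= B.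
Proof.
move=> G0 GB.
have hc : DS G P @ \oo --> sup (range (DS G P)).
  apply: nondecreasing_cvgn.
    by apply/nondecreasing_seqP => N; apply: DS_mono.
  by exists B => _ [N _ <-].
exists (sup (range (DS G P))); split => //; split.
  by apply: (cvgr_to_ge hc); near=> N; apply: DS_ge0.
by apply: (cvgr_to_le hc); near=> N; apply: GB.
Unshelve. all: by end_near.
Qed.


Definition nc (z : R[i]) : R := complex.Re `|z|.

Lemma normcE (z : R[i]) : `|z| = (nc z)%:C.
Proof. by rewrite /nc normc_def. Qed.

Lemma nc_ge0 z : 0 <= nc z.
Proof. by rewrite -lecR -normcE normr_ge0. Qed.

Lemma ncM x y : nc (x * y) = nc x * nc y.
Proof. by apply: complexI; rewrite rmorphM -!normcE normrM. Qed.

Lemma nc_def z : nc z = Num.sqrt (complex.Re z ^+ 2 + complex.Im z ^+ 2).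
Proof. by rewrite /nc normc_def. Qed.

Lemma Re_nc z : `|complex.Re z| <= nc z.
Proof.
rewrite nc_def -sqrtr_sqr ler_sqrt; last by rewrite addr_ge0 // sqr_ge0.
by rewrite lerDl sqr_ge0.
Qed.

Lemma Im_nc z : `|complex.Im z| <= nc z.
Proof.
rewrite nc_def -sqrtr_sqr ler_sqrt; last by rewrite addr_ge0 // sqr_ge0.
by rewrite lerDr sqr_ge0.
Qed.

Lemma nc_cplx a b : nc (a +i* b)%C <= `|a| + `|b|.
Proof.
rewrite nc_def /=.
have hab : 0 <= `|a| + `|b| by rewrite addr_ge0.
rewrite -(ger0_norm hab) -sqrtr_sqr ler_sqrt; last by rewrite sqr_ge0.
rewrite sqrrD -[a ^+ 2]real_normK ?num_real // -[b ^+ 2]real_normK ?num_real //.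
by rewrite -addrA lerD2l lerDr mulrn_wge0 // mulr_ge0.
Qed.

Lemma ReD (x y : R[i]) : complex.Re (x + y) = complex.Re x + complex.Re y.
Proof. by case: x; case: y. Qed.
Lemma ImD (x y : R[i]) : complex.Im (x + y) = complex.Im x + complex.Im y.
Proof. by case: x; case: y. Qed.

Lemma Re_sum (I : Type) (s : seq I) (P : pred I) (F : I -> R[i]) :
  complex.Re (\sum_(i <- s | P i) F i) = \sum_(i <- s | P i) complex.Re (F i).
Proof. by apply: (big_morph _ ReD). Qed.
Lemma Im_sum (I : Type) (s : seq I) (P : pred I) (F : I -> R[i]) :
  complex.Im (\sum_(i <- s | P i) F i) = \sum_(i <- s | P i) complex.Im (F i).
Proof. by apply: (big_morph _ ImD). Qed.


Lemma conv_gen (t : int -> int -> R[i]) (P : int -> int -> bool) (B : R) :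
  (forall N, DS (fun k l => nc (t k l)) P N <= B) ->
  exists s : R[i],
    (fun N => complex.Re (\sum_(k <- zrange N) \sum_(l <- zrange N | P k l) t k l))
       @ \oo --> complex.Re s /\
    (fun N => complex.Im (\sum_(k <- zrange N) \sum_(l <- zrange N | P k l) t k l))
       @ \oo --> complex.Im s /\
    `|s| <= (4 * B)%:C.
Proof.
move=> hB.
have hv0 : forall k l, P k l -> 0 <= nc (t k l) by move=> *; apply: nc_ge0.
have [lv [cv [lv0 lvB]]] := DS_cvg _ _ _ hv0 hB.
have hu0 : forall k l, P k l -> 0 <= complex.Re (t k l) + nc (t k l).
  by move=> k l _; have := Re_nc (t k l); rewrite ler_norml; lra.
have hu0' : forall k l, P k l -> 0 <= complex.Im (t k l) + nc (t k l).
  by move=> k l _; have := Im_nc (t k l); rewrite ler_norml; lra.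
have huB : forall N, DS (fun k l => complex.Re (t k l) + nc (t k l)) P N <= 2 * B.
  move=> N; apply: (@le_trans _ _ (DS (fun k l => nc (t k l) *+ 2) P N)).
    apply: ler_sum => k _; apply: ler_sum => l _.
    by have := Re_nc (t k l); rewrite ler_norml mulr2n; lra.
  rewrite /DS; under eq_bigr do rewrite sumrMnl.
  rewrite sumrMnl mulr2n; have := hB N; rewrite /DS; lra.
have huB' : forall N, DS (fun k l => complex.Im (t k l) + nc (t k l)) P N <= 2 * B.
  move=> N; apply: (@le_trans _ _ (DS (fun k l => nc (t k l) *+ 2) P N)).
    apply: ler_sum => k _; apply: ler_sum => l _.
    by have := Im_nc (t k l); rewrite ler_norml mulr2n; lra.
  rewrite /DS; under eq_bigr do rewrite sumrMnl.
  rewrite sumrMnl mulr2n; have := hB N; rewrite /DS; lra.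
have [lu [cu [lu0 luB]]] := DS_cvg _ _ _ hu0 huB.
have [lu' [cu' [lu0' luB']]] := DS_cvg _ _ _ hu0' huB'.
exists ((lu - lv) +i* (lu' - lv)); split; [|split].
- have -> : (fun N => complex.Re (\sum_(k <- zrange N) \sum_(l <- zrange N | P k l) t k l))
     = fun N => DS (fun k l => complex.Re (t k l) + nc (t k l)) P N - DS (fun k l => nc (t k l)) P N.
    apply/funext => N /=; rewrite /DS -sumrB Re_sum; apply: eq_bigr => k _.
    rewrite -sumrB Re_sum; apply: eq_bigr => l _; lra.
  exact: (cvgB cu cv).
- have -> : (fun N => complex.Im (\sum_(k <- zrange N) \sum_(l <- zrange N | P k l) t k l))
     = fun N => DS (fun k l => complex.Im (t k l) + nc (t k l)) P N - DS (fun k l => nc (t k l)) P N.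
    apply/funext => N /=; rewrite /DS -sumrB Im_sum; apply: eq_bigr => k _.
    rewrite -sumrB Im_sum; apply: eq_bigr => l _; lra.
  exact: (cvgB cu' cv).
- rewrite normcE lecR; apply: (le_trans (nc_cplx _ _)).
  have h1 : `|lu - lv| <= 2 * B by rewrite ler_norml; lra.
  have h2 : `|lu' - lv| <= 2 * B by rewrite ler_norml; lra.
  lra.
Qed.

Lemma key_pos (X : R) : 1 <= X -> (X ^+ 2)^-1 <= 2 / X - 2 / (X + 1).
Proof.
move=> hX; have h0 : X != 0 by apply/eqP; lra.
have h1 : X + 1 != 0 by apply/eqP; lra.
rewrite -subr_ge0.
have -> : 2 / X - 2 / (X + 1) - (X ^+ 2)^-1 = (X - 1) / (X ^+ 2 * (X + 1)) by field; rewrite h0 h1.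
apply: divr_ge0; first lra.
apply: mulr_ge0; [exact: sqr_ge0 | lra].
Qed.

Lemma key_neg (X : R) : X <= -2 -> (X ^+ 2)^-1 <= 2 / X - 2 / (X + 1).
Proof.
move=> hX; have h0 : X != 0 by apply/eqP; lra.
have h1 : X + 1 != 0 by apply/eqP; lra.
rewrite -subr_ge0.
have -> : 2 / X - 2 / (X + 1) - (X ^+ 2)^-1 = (1 - X) / (X ^+ 2 * (- (X + 1))) by field; rewrite h0 h1.
apply: divr_ge0; first lra.
apply: mulr_ge0; [exact: sqr_ge0 | lra].
Qed.

Lemma inv_bnd (X : R) : 1 <= X -> 0 <= 2 / X <= 2.
Proof.
move=> hX; have hX0 : 0 < X by lra.
rewrite divr_ge0 ?(ltW hX0) //= ler_pdivrMr //; lra.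
Qed.


Definition V (x : int) : R := `|(x%:~R : R)|^-1.
Definition W (x : int) : R := V x ^+ 2.
Definition hh (x : int) : R :=
  if (0 < x)%R then 3 - 2 / x%:~R else if x == 0 then 1 else -2 - 2 / x%:~R.

Lemma V_ge0 x : 0 <= V x. Proof. by rewrite /V invr_ge0. Qed.
Lemma W_ge0 x : 0 <= W x. Proof. by rewrite /W sqr_ge0. Qed.

Lemma W_E x : W x = ((x%:~R : R) ^+ 2)^-1.
Proof. by rewrite /W /V exprVn real_normK ?num_real. Qed.

Lemma intR1 {x : int} : (1 <= x)%R -> (1 : R) <= x%:~R.
Proof. by move=> h; rewrite -[1 : R]/((1 : int)%:~R) ler_int. Qed.

Lemma intRle {x y : int} : (x <= y)%R -> (x%:~R : R) <= y%:~R.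
Proof. by move=> h; rewrite ler_int. Qed.

Lemma W_step x : W x <= hh (x + 1) - hh x.
Proof.
rewrite W_E /hh.
have [xp|xn] := ltrP 0 x.
  have -> : (0 < x + 1)%R by lia.
  rewrite intrD; have := key_pos _ (intR1 xp); lra.
have [->|x0] := eqVneq x 0.
  rewrite /= expr0n /= invr0 divr1; lra.
have [->|xm1] := eqVneq x (-1).
  rewrite /=; have -> : (-1 : R) ^+ 2 = 1 by rewrite sqrrN expr1n.
  rewrite invr1 -[(-1)%:~R]/((- 1 : R)) divrN divr1; lra.
have x2 : (x <= -2)%R by lia.
have -> : (0 < x + 1)%R = false by lia.
have -> : (x + 1 == 0) = false by apply/eqP; lia.

rewrite intrD.
have := key_neg _ (intRle x2); lra.
Qed.

Lemma hh_bnd x : -2 <= hh x <= 3.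
Proof.
rewrite /hh; have [xp|xn] := ltrP 0 x.
  by have := inv_bnd _ (intR1 xp); lra.
case: ifP => [_|/eqP x0]; first by lra.
have x1 : (1 <= - x)%R by lia.
have := inv_bnd _ (intR1 x1); rewrite mulrNz divrN; lra.
Qed.


Lemma sumW_nat a L : \sum_(0 <= i < L) W (i%:Z + a) <= hh (L%:Z + a) - hh a.
Proof.
elim: L => [|L IH]; first by rewrite big_geq // add0r subrr.
rewrite big_nat_recr //=.
rewrite (_ : (L.+1)%:Z + a = (L%:Z + a) + 1); last by lia.
have := W_step (L%:Z + a); lra.
Qed.

Lemma sumW a N : \sum_(k <- zrange N) W (k + a) <= 5.
Proof.
rewrite /zrange big_map.
have -> : iota 0 (N + N).+1 = index_iota 0 (N + N).+1 by rewrite /index_iota subn0.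
rewrite (eq_bigr (fun i : nat => W (i%:Z + (a - N%:Z)))); last first.
  by move=> i _; congr W; lia.
apply: (le_trans (sumW_nat _ _)).
have := hh_bnd ((N + N).+1%:Z + (a - N%:Z)); have := hh_bnd (a - N%:Z); lra.
Qed.

Lemma amgm (u v : R) : u * v <= (u ^+ 2 + v ^+ 2) / 2.
Proof.
rewrite ler_pdivlMr //; have := sqr_ge0 (u - v); rewrite sqrrB; lra.
Qed.

Lemma R2 (A a b c e x : R) : 0 <= A -> 0 <= a -> 0 <= b -> 0 <= c -> 0 <= e -> 0 <= x ->
  a * e <= (a + e) * x ->
  A * a * (A * b) * (A * c) * (e * c) <=
  A ^+ 3 * (x / 2) * ((a * c) ^+ 2 + (b * c) ^+ 2 + (b * c) ^+ 2 + (e * c) ^+ 2).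
Proof.
move=> A0 a0 b0 c0 e0 x0 hae.
have h1 : a * e * (b * c * c) <= (a + e) * x * (b * c * c).
  by apply: ler_wpM2r => //; rewrite !mulr_ge0.
have h2 := amgm (a * c) (b * c).
have h3 := amgm (e * c) (b * c).
have h4 : (a + e) * x * (b * c * c) = x * ((a * c) * (b * c) + (e * c) * (b * c)) by ring.
have h5 : x * ((a * c) * (b * c) + (e * c) * (b * c)) <=
   x * (((a * c) ^+ 2 + (b * c) ^+ 2) / 2 + ((e * c) ^+ 2 + (b * c) ^+ 2) / 2).
  by apply: ler_wpM2l => //; apply: lerD.
have h6 : A * a * (A * b) * (A * c) * (e * c) = A ^+ 3 * (a * e * (b * c * c)) by ring.
rewrite h6 -[A ^+ 3 * (x / 2) * _]mulrA; apply: ler_wpM2l; first by rewrite exprn_ge0.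
apply: (le_trans h1); rewrite h4; apply: (le_trans h5); rewrite le_eqVlt; apply/orP; left; apply/eqP; ring.
Qed.


Lemma R3 (A a b c f x : R) : 0 <= A -> 0 <= a -> 0 <= b -> 0 <= c -> 0 <= f -> 0 <= x ->
  c * f <= (c + f) * x ->
  A * a * (A * b) * (A * c) * (a * f) <=
  A ^+ 3 * (x / 2) * ((a * b) ^+ 2 + (a * c) ^+ 2 + (a * b) ^+ 2 + (a * f) ^+ 2).
Proof.
move=> A0 a0 b0 c0 f0 x0 hcf.
have h1 : c * f * (a * a * b) <= (c + f) * x * (a * a * b).
  by apply: ler_wpM2r => //; rewrite !mulr_ge0.
have h2 := amgm (a * b) (a * c).
have h3 := amgm (a * b) (a * f).
have h4 : (c + f) * x * (a * a * b) = x * ((a * b) * (a * c) + (a * b) * (a * f)) by ring.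
have h5 : x * ((a * b) * (a * c) + (a * b) * (a * f)) <=
   x * (((a * b) ^+ 2 + (a * c) ^+ 2) / 2 + ((a * b) ^+ 2 + (a * f) ^+ 2) / 2).
  by apply: ler_wpM2l => //; apply: lerD.
have h6 : A * a * (A * b) * (A * c) * (a * f) = A ^+ 3 * (c * f * (a * a * b)) by ring.
rewrite h6 -[A ^+ 3 * (x / 2) * _]mulrA; apply: ler_wpM2l; first by rewrite exprn_ge0.
apply: (le_trans h1); rewrite h4; apply: (le_trans h5); rewrite le_eqVlt; apply/orP; left; apply/eqP; ring.
Qed.

Lemma R4 (A a b c e f x : R) : 0 <= A -> 0 <= a -> 0 <= b -> 0 <= c -> 0 <= e -> 0 <= f -> 0 <= x ->
  a * e <= (a + e) * x ->
  A * a * (A * b) * (A * c) * (e * f) <=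
  A ^+ 3 * (x / 2) * ((a * c) ^+ 2 + (b * f) ^+ 2 + (e * c) ^+ 2 + (b * f) ^+ 2).
Proof.
move=> A0 a0 b0 c0 e0 f0 x0 hae.
have h1 : a * e * (b * c * f) <= (a + e) * x * (b * c * f).
  by apply: ler_wpM2r => //; rewrite !mulr_ge0.
have h2 := amgm (a * c) (b * f).
have h3 := amgm (e * c) (b * f).
have h4 : (a + e) * x * (b * c * f) = x * ((a * c) * (b * f) + (e * c) * (b * f)) by ring.
have h5 : x * ((a * c) * (b * f) + (e * c) * (b * f)) <=
   x * (((a * c) ^+ 2 + (b * f) ^+ 2) / 2 + ((e * c) ^+ 2 + (b * f) ^+ 2) / 2).
  by apply: ler_wpM2l => //; apply: lerD.
have h6 : A * a * (A * b) * (A * c) * (e * f) = A ^+ 3 * (a * e * (b * c * f)) by ring.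
rewrite h6 -[A ^+ 3 * (x / 2) * _]mulrA; apply: ler_wpM2l; first by rewrite exprn_ge0.
apply: (le_trans h1); rewrite h4; apply: (le_trans h5); rewrite le_eqVlt; apply/orP; left; apply/eqP; ring.
Qed.


Lemma pair_bnd (u w : int) (n : nat) : (0 < n)%N -> u != 0 -> w != 0 ->
  w - u = 2 * n%:Z -> V u * V w <= (V u + V w) * (2 * n%:R)^-1.
Proof.
move=> n0 u0 w0 e.
have hp : 0 < `|(u%:~R : R)| by rewrite normr_gt0 intr_eq0.
have hr : 0 < `|(w%:~R : R)| by rewrite normr_gt0 intr_eq0.
have hm : 0 < 2 * (n%:R : R) by rewrite mulr_gt0 // ltr0n.
have hd : 2 * (n%:R : R) = w%:~R - u%:~R.
  by rewrite -intrB e intrM /=.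
have hle : 2 * (n%:R : R) <= `|(u%:~R : R)| + `|(w%:~R : R)|.
  rewrite hd [X in _ <= X]addrC; apply: (le_trans (ler_norm _)); exact: ler_normB.
rewrite /V.
move: hp hr hm hle; set p := `|(u%:~R : R)|; set r := `|(w%:~R : R)|; set m := 2 * (n%:R : R).
move=> hp hr hm hle.
have -> : (p^-1 + r^-1) * m^-1 = ((p + r) / m) * (p^-1 * r^-1).
  by field; rewrite ?gt_eqF.
rewrite -[X in X <= _]mul1r; apply: ler_wpM2r.
  by rewrite mulr_ge0 // invr_ge0 ltW.
by rewrite ler_pdivlMr // mul1r.
Qed.


Lemma DSW1 c (f : int -> int) N :
  \sum_(k <- zrange N) \sum_(l <- zrange N) W (k + c) * W (l + f k) <= 25.
Proof.
apply: (@le_trans _ _ (\sum_(k <- zrange N) W (k + c) * 5)).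
  apply: ler_sum => k _; rewrite -mulr_sumr; apply: ler_wpM2l; first exact: W_ge0.
  exact: sumW.
rewrite -mulr_suml; have := sumW c N; lra.
Qed.

Lemma DSW2 c (f : int -> int) N :
  \sum_(k <- zrange N) \sum_(l <- zrange N) W (l + c) * W (k + f l) <= 25.
Proof. rewrite exchange_big; exact: DSW1. Qed.

Lemma drop_filter (s : seq int) (P : pred int) (F : int -> R) :
  (forall l, 0 <= F l) -> \sum_(l <- s | P l) F l <= \sum_(l <- s) F l.
Proof.
move=> F0; rewrite big_mkcond; apply: ler_sum => l _; case: ifP => // _; exact: F0.
Qed.

Lemma assemble (t : int -> int -> R[i]) (P : int -> int -> bool) (K : R)
  (g1 g2 g3 g4 : int -> int -> R) : 0 <= K ->
  (forall k l, 0 <= g1 k l) -> (forall k l, 0 <= g2 k l) ->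
  (forall k l, 0 <= g3 k l) -> (forall k l, 0 <= g4 k l) ->
  (forall N, \sum_(k <- zrange N) \sum_(l <- zrange N) g1 k l <= 25) ->
  (forall N, \sum_(k <- zrange N) \sum_(l <- zrange N) g2 k l <= 25) ->
  (forall N, \sum_(k <- zrange N) \sum_(l <- zrange N) g3 k l <= 25) ->
  (forall N, \sum_(k <- zrange N) \sum_(l <- zrange N) g4 k l <= 25) ->
  (forall k l, P k l -> nc (t k l) <= K * (g1 k l + g2 k l + g3 k l + g4 k l)) ->
  forall N, DS (fun k l => nc (t k l)) P N <= K * 100.
Proof.
move=> K0 p1 p2 p3 p4 s1 s2 s3 s4 ht N.
have gp : forall k l, 0 <= K * (g1 k l + g2 k l + g3 k l + g4 k l).
  by move=> k l; rewrite mulr_ge0 // !addr_ge0.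
apply: (@le_trans _ _ (\sum_(k <- zrange N) \sum_(l <- zrange N)
   K * (g1 k l + g2 k l + g3 k l + g4 k l))).
  apply: ler_sum => k _; apply: (le_trans _ (drop_filter _ _ _ (gp k))).
  by apply: ler_sum => l /ht.
under eq_bigr do rewrite -mulr_sumr !big_split.
rewrite -mulr_sumr !big_split /=; apply: ler_wpM2l => //.
have := s1 N; have := s2 N; have := s3 N; have := s4 N; lra.
Qed.


Lemma nc_real (x : R) : nc (x%:C) = `|x|.
Proof. by rewrite nc_def /= expr0n /= addr0 sqrtr_sqr. Qed.

Lemma nc_intinv (d : int) : nc ((d%:~R : R[i])^-1) = V d.
Proof.
apply: complexI; rewrite -normcE normfV /V fmorphV /= -nc_real normcE.
by rewrite rmorph_int.
Qed.

Lemma V_mul (d1 d2 : int) : V (d1 * d2) = V d1 * V d2.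
Proof. by rewrite /V intrM normrM invfM. Qed.

Lemma V_opp (d : int) : V (- d) = V d.
Proof. by rewrite /V mulrNz normrN. Qed.


Lemma term_base (q : R -> R[i]) (A : R) (d : int) (k l : int) :
  (forall x, nc (Coef q x) <= A * V x) ->
  nc (Coef q k * Coef q l * Coef q (- k - l) / d%:~R) <=
  A * V k * (A * V l) * (A * V (k + l)) * V d.
Proof.
move=> hC; rewrite !ncM nc_intinv; apply: ler_wpM2r; first exact: V_ge0.
apply: ler_pM; rewrite ?mulr_ge0 ?nc_ge0 //.
  by apply: ler_pM; rewrite ?nc_ge0.
by rewrite -opprD -V_opp.
Qed.

Definition Pf (n : nat) (k l : int) : bool :=
  (k != 0) && (k != - (2 * n%:Z)) && (k + l != 0) && (k + l != - (2 * n%:Z)).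

Lemma term2 (q : R -> R[i]) (A : R) (n : nat) (k l : int) :
  (0 < n)%N -> 0 <= A -> (forall x, nc (Coef q x) <= A * V x) -> Pf n k l ->
  nc (Coef q k * Coef q l * Coef q (- k - l) / (den2 n k l)%:~R) <=
  A ^+ 3 * ((2 * n%:R)^-1 / 2) *
   (W (k + 0) * W (l + k) + W (l + 0) * W (k + l) + W (l + 0) * W (k + l)
    + W (k + 2 * n%:Z) * W (l + k)).
Proof.
move=> n0 A0 hC /andP [/andP [/andP [k0 kn] m0] mn].
apply: (le_trans (term_base _ _ _ _ _ hC)); rewrite /den2 V_mul.
have hx : 0 <= (2 * (n%:R : R))^-1 by rewrite invr_ge0 mulr_ge0 // ler0n.
have hae : V k * V (2 * n%:Z + k) <= (V k + V (2 * n%:Z + k)) * (2 * n%:R)^-1.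
  by apply: pair_bnd => //; [apply/eqP; move/eqP: kn; lia | lia].
have := R2 _ _ _ _ _ _ A0 (V_ge0 k) (V_ge0 l) (V_ge0 (k + l)) (V_ge0 (2 * n%:Z + k)) hx hae.
move/le_trans; apply; rewrite le_eqVlt; apply/orP; left; apply/eqP.
congr (_ * _); rewrite /W !addr0 (addrC l k) (addrC k (2 * n%:Z)) !exprMn //.
Qed.


Lemma term3 (q : R -> R[i]) (A : R) (n : nat) (k l : int) :
  (0 < n)%N -> 0 <= A -> (forall x, nc (Coef q x) <= A * V x) -> Pf n k l ->
  nc (Coef q k * Coef q l * Coef q (- k - l) / (den3 n k l)%:~R) <=
  A ^+ 3 * ((2 * n%:R)^-1 / 2) *
   (W (k + 0) * W (l + 0) + W (k + 0) * W (l + k) + W (k + 0) * W (l + 0)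
    + W (k + 0) * W (l + (k + 2 * n%:Z))).
Proof.
move=> n0 A0 hC /andP [/andP [/andP [k0 kn] m0] mn].
apply: (le_trans (term_base _ _ _ _ _ hC)); rewrite /den3 V_mul.
have hx : 0 <= (2 * (n%:R : R))^-1 by rewrite invr_ge0 mulr_ge0 // ler0n.
have hcf : V (k + l) * V (2 * n%:Z + k + l) <= (V (k + l) + V (2 * n%:Z + k + l)) * (2 * n%:R)^-1.
  by apply: pair_bnd => //; [apply/eqP; move/eqP: mn; lia | lia].
have := R3 _ _ _ _ _ _ A0 (V_ge0 k) (V_ge0 l) (V_ge0 (k + l)) (V_ge0 (2 * n%:Z + k + l)) hx hcf.
move/le_trans; apply; rewrite le_eqVlt; apply/orP; left; apply/eqP.
have E : l + (k + 2 * n%:Z) = 2 * n%:Z + k + l by lia.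
congr (_ * _); rewrite /W !addr0 E (addrC l k) !exprMn //.
Qed.

Lemma term4 (q : R -> R[i]) (A : R) (n : nat) (k l : int) :
  (0 < n)%N -> 0 <= A -> (forall x, nc (Coef q x) <= A * V x) -> Pf n k l ->
  nc (Coef q k * Coef q l * Coef q (- k - l) / (den4 n k l)%:~R) <=
  A ^+ 3 * ((2 * n%:R)^-1 / 2) *
   (W (k + 0) * W (l + k) + W (l + 0) * W (k + (l + 2 * n%:Z))
    + W (k + 2 * n%:Z) * W (l + k) + W (l + 0) * W (k + (l + 2 * n%:Z))).
Proof.
move=> n0 A0 hC /andP [/andP [/andP [k0 kn] m0] mn].
apply: (le_trans (term_base _ _ _ _ _ hC)); rewrite /den4 V_mul.
have hx : 0 <= (2 * (n%:R : R))^-1 by rewrite invr_ge0 mulr_ge0 // ler0n.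
have hae : V k * V (2 * n%:Z + k) <= (V k + V (2 * n%:Z + k)) * (2 * n%:R)^-1.
  by apply: pair_bnd => //; [apply/eqP; move/eqP: kn; lia | lia].
have := R4 _ _ _ _ _ _ _ A0 (V_ge0 k) (V_ge0 l) (V_ge0 (k + l)) (V_ge0 (2 * n%:Z + k))
   (V_ge0 (2 * n%:Z + k + l)) hx hae.
move/le_trans; apply; rewrite le_eqVlt; apply/orP; left; apply/eqP.
have E : k + (l + 2 * n%:Z) = 2 * n%:Z + k + l by lia.
congr (_ * _); rewrite /W !addr0 E (addrC l k) (addrC k (2 * n%:Z)) !exprMn //.
Qed.


Lemma Coef_opp (q : R -> R[i]) (x : int) : Coef q (- x) = Coef q x.
Proof.
rewrite /Coef; congr ((_ / _) +i* (_ / _))%C; congr Rintegral; apply/funext => y;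
  by rewrite mulrNz mulNr cosN.
Qed.

Lemma nc0 : nc 0 = 0.
Proof. by rewrite -[0 : R[i]]/((0 : R)%:C) nc_real normr0. Qed.

Lemma V_nat (m : nat) : V m%:Z = (m%:R)^-1.
Proof. by rewrite /V pmulrn normr_nat. Qed.

Lemma coef_bound (q : R -> R[i]) (M : R) (n0 : nat) :
  (forall n : nat, (n0 <= n)%N -> (0 < n)%N -> `|Coef q n%:Z| <= ((M / n%:R)%:C)%C) ->
  Coef q 0 = 0 ->
  exists A, 0 <= A /\ forall x, nc (Coef q x) <= A * V x.
Proof.
move=> hM hC0.
set S := \sum_(i < n0) (i%:R : R) * nc (Coef q i%:Z).
have S0 : 0 <= S by apply: sumr_ge0 => i _; rewrite mulr_ge0 ?ler0n ?nc_ge0.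
exists (`|M| + S); split; first by rewrite addr_ge0.
have hnat : forall m : nat, (0 < m)%N -> nc (Coef q m%:Z) <= (`|M| + S) * V m%:Z.
  move=> m m0; rewrite V_nat.
  have hm : (0 : R) < m%:R by rewrite ltr0n.
  case: (leqP n0 m) => hnm.
    have := hM m hnm m0; rewrite normcE lecR => h; apply: (le_trans h).
    rewrite ler_pM2r ?invr_gt0 //; have := ler_norm M; lra.
  rewrite ler_pdivlMr // mulrC.
  apply: (@le_trans _ _ S); last by have := normr_ge0 M; lra.
  rewrite /S (bigD1 (Ordinal hnm)) //=; rewrite lerDl.
  by apply: sumr_ge0 => i _; rewrite mulr_ge0 ?ler0n ?nc_ge0.
move=> x; case: (ltrgt0P x) => hx.
- have -> : x = (`|x|%N)%:Z by rewrite gez0_abs // ltW.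
  by apply: hnat; rewrite absz_gt0 gt_eqF.
- rewrite -Coef_opp -V_opp.
  have -> : - x = (`|x|%N)%:Z by rewrite ltz0_abs.
  by apply: hnat; rewrite absz_gt0 lt_eqF.
- by rewrite hx hC0 nc0 /V mulr0z normr0 invr0 mulr0.
Qed.


Lemma finish (q : R -> R[i]) (A : R) (d : nat -> int -> int -> int)
  (g1 g2 g3 g4 : nat -> int -> int -> R) : 0 <= A ->
  (forall n k l, 0 <= g1 n k l) -> (forall n k l, 0 <= g2 n k l) ->
  (forall n k l, 0 <= g3 n k l) -> (forall n k l, 0 <= g4 n k l) ->
  (forall n N, \sum_(k <- zrange N) \sum_(l <- zrange N) g1 n k l <= 25) ->
  (forall n N, \sum_(k <- zrange N) \sum_(l <- zrange N) g2 n k l <= 25) ->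
  (forall n N, \sum_(k <- zrange N) \sum_(l <- zrange N) g3 n k l <= 25) ->
  (forall n N, \sum_(k <- zrange N) \sum_(l <- zrange N) g4 n k l <= 25) ->
  (forall n k l, (0 < n)%N -> Pf n k l ->
     nc (Coef q k * Coef q l * Coef q (- k - l) / (d n k l)%:~R) <=
     A ^+ 3 * ((2 * n%:R)^-1 / 2) * (g1 n k l + g2 n k l + g3 n k l + g4 n k l)) ->
  series_bigO_inv_n q d.
Proof.
move=> A0 p1 p2 p3 p4 s1 s2 s3 s4 ht.
exists (100 * A ^+ 3), 0%N => n _ n0.
have K0 : 0 <= A ^+ 3 * ((2 * (n%:R : R))^-1 / 2).
  by rewrite !mulr_ge0 ?exprn_ge0 ?invr_ge0 ?mulr_ge0 ?ler0n.
have hB := assemble (fun k l => Coef q k * Coef q l * Coef q (- k - l) / (d n k l)%:~R)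
  (Pf n) _ _ _ _ _ K0 (p1 n) (p2 n) (p3 n) (p4 n) (s1 n) (s2 n) (s3 n) (s4 n)
  (fun k l => ht n k l n0).
have [s [h1 [h2 h3]]] := conv_gen _ _ _ hB.
exists s; split; first exact: h1.
split; first exact: h2.
apply: (le_trans h3); rewrite lecR le_eqVlt; apply/orP; left; apply/eqP.
have nz : (n%:R : R) != 0 by rewrite pnatr_eq0 -lt0n.
by field.
Qed.

End S.

Theorem lemma3 (R : realType) (q : R -> R[i]) :
  L1_0pi q ->
  Coef q 0 = 0 ->
  (exists (M : R) (n0 : nat), forall n : nat, (n0 <= n)%N -> (0 < n)%N ->
      `|Coef q n%:Z| <= ((M / n%:R)%:C)%C) ->
  series_bigO_inv_n q den2 /\ series_bigO_inv_n q den3 /\ series_bigO_inv_n q den4.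
Proof.
move=> _ hC0 [M [n0 hM]].
have [A [A0 hC]] := @coef_bound R q M n0 hM hC0.
have Wp : forall a b : int, 0 <= W R a * W R b by move=> a b; rewrite mulr_ge0 ?W_ge0.
split; [|split].
- apply: (@finish R q A den2
    (fun n k l => W R (k + 0) * W R (l + k)) (fun n k l => W R (l + 0) * W R (k + l))
    (fun n k l => W R (l + 0) * W R (k + l)) (fun n k l => W R (k + 2 * n%:Z) * W R (l + k)))
    => //.
  + by move=> n N; exact: (@DSW1 R 0 (fun k => k) N).
  + by move=> n N; exact: (@DSW2 R 0 (fun k => k) N).
  + by move=> n N; exact: (@DSW2 R 0 (fun k => k) N).
  + by move=> n N; exact: (@DSW1 R (2 * n%:Z) (fun k => k) N).
  + by move=> n k l n1 hP; exact: (@term2 R q A n k l n1 A0 hC hP).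
- apply: (@finish R q A den3
    (fun n k l => W R (k + 0) * W R (l + 0)) (fun n k l => W R (k + 0) * W R (l + k))
    (fun n k l => W R (k + 0) * W R (l + 0)) (fun n k l => W R (k + 0) * W R (l + (k + 2 * n%:Z))))
    => //.
  + by move=> n N; exact: (@DSW1 R 0 (fun k => 0) N).
  + by move=> n N; exact: (@DSW1 R 0 (fun k => k) N).
  + by move=> n N; exact: (@DSW1 R 0 (fun k => 0) N).
  + by move=> n N; exact: (@DSW1 R 0 (fun k => k + 2 * n%:Z) N).
  + by move=> n k l n1 hP; exact: (@term3 R q A n k l n1 A0 hC hP).
- apply: (@finish R q A den4
    (fun n k l => W R (k + 0) * W R (l + k)) (fun n k l => W R (l + 0) * W R (k + (l + 2 * n%:Z)))
    (fun n k l => W R (k + 2 * n%:Z) * W R (l + k)) (fun n k l => W R (l + 0) * W R (k + (l + 2 * n%:Z))))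
    => //.
  + by move=> n N; exact: (@DSW1 R 0 (fun k => k) N).
  + by move=> n N; exact: (@DSW2 R 0 (fun l => l + 2 * n%:Z) N).
  + by move=> n N; exact: (@DSW1 R (2 * n%:Z) (fun k => k) N).
  + by move=> n N; exact: (@DSW2 R 0 (fun l => l + 2 * n%:Z) N).
  + by move=> n k l n1 hP; exact: (@term4 R q A n k l n1 A0 hC hP).
Qed.
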